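(* Let $S$ be an inverse semigroup that is a mirror semigroup, with semilattice of idempotents $\Sigma=\Sigma(S)$. Then $S$ is separately Scott-continuous if and only if $\Sigma$ is meet-continuous.
   Context: An inverse semigroup is a semigroup $S$ in which every $s$ has a unique $s^*$ with $ss^*s=s$ and $s^*ss^*=s^*$. $\Sigma(S)$ is the set of idempotents of $S$. The intrinsic order is $s\leqslant t$ iff $s=t\epsilon$ for some idempotent $\epsilon$. A subset of a poset is directed if it is nonempty and any two of its elements have an upper bound in it. $S$ is a mirror semigroup if every directed subset of $\Sigma$ having a supremum in $(\Sigma,\leqslant)$ also has a supremum in $(S,\leqslant)$. $\bigvee A$ denotes the supremum of $A$ in $S$. $S$ is separately Scott-continuous if for every directed subset $D\subseteq S$ that has a supremum and every $s\in S$, $\bigvee(Ds)$ exists and equals $(\bigvee D)s$. $\Sigma$ is meet-continuous if for every directed subset $\Delta\subseteq\Sigma$ having a supremum in $\Sigma$ and every $\epsilon\in\Sigma$, the supremum of $\Delta\epsilon$ in $\Sigma$ exists and equals $(\sup\Delta)\epsilon$ (i.e. the same property as separate Scott-continuity, for the semilattice $\Sigma$). *)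

(* Defs.v *)
Record InverseSemigroup := {
  carrier :> Type;
  mul : carrier -> carrier -> carrier;
  mul_assoc : forall a b c, mul a (mul b c) = mul (mul a b) c;
  inverse_unique : forall s, exists! t, mul (mul s t) s = s /\ mul (mul t s) t = t
}.

Section Defs.
Variable S : InverseSemigroup.

Definition idempotent (e : S) : Prop := mul S e e = e.

Definition ileq (s t : S) : Prop := exists e, idempotent e /\ s = mul S t e.

Definition upper_bound (A : S -> Prop) (x : S) : Prop :=
  forall a, A a -> ileq a x.

Definition is_sup_in (P : S -> Prop) (A : S -> Prop) (x : S) : Prop :=
  P x /\ upper_bound A x /\ (forall y, P y -> upper_bound A y -> ileq x y).

Definition is_sup (A : S -> Prop) (x : S) : Prop := is_sup_in (fun _ => True) A x.

Definition is_sup_Sigma (A : S -> Prop) (x : S) : Prop := is_sup_in idempotent A x.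

Definition directed (D : S -> Prop) : Prop :=
  (exists d, D d) /\
  (forall a b, D a -> D b -> exists c, D c /\ ileq a c /\ ileq b c).

Definition rmul_set (D : S -> Prop) (s : S) : S -> Prop :=
  fun y => exists d, D d /\ y = mul S d s.

Definition subset_Sigma (D : S -> Prop) : Prop := forall d, D d -> idempotent d.

Definition mirror_semigroup : Prop :=
  forall Delta : S -> Prop, subset_Sigma Delta -> directed Delta ->
    (exists x, is_sup_Sigma Delta x) -> exists y, is_sup Delta y.

Definition separately_Scott_continuous : Prop :=
  forall (D : S -> Prop) (x : S), directed D -> is_sup D x ->
    forall s, is_sup (rmul_set D s) (mul S x s).

Definition Sigma_meet_continuous : Prop :=
  forall (Delta : S -> Prop) (x : S), subset_Sigma Delta -> directed Delta ->
    is_sup_Sigma Delta x ->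
    forall e, idempotent e -> is_sup_Sigma (rmul_set Delta e) (mul S x e).

End Defs.

(* Main.v *)
Require Import Defs.
From Stdlib Require Import IndefiniteDescription.

Notation "a ⋅ b" := (mul _ a b) (at level 40, left associativity).

Lemma ex_of_ex1 {A} (P : A -> Prop) : (exists! x, P x) -> exists x, P x.
Proof. intros [x [H _]]; eauto. Qed.

Definition inv {S : InverseSemigroup} (s : S) : S :=
  proj1_sig (constructive_indefinite_description _ (ex_of_ex1 _ (inverse_unique S s))).

Lemma inv_spec {S : InverseSemigroup} (s : S) : s ⋅ inv s ⋅ s = s /\ inv s ⋅ s ⋅ inv s = inv s.
Proof. unfold inv. destruct constructive_indefinite_description; simpl; auto. Qed.

Lemma inv_uniq {S : InverseSemigroup} (s t : S) : s ⋅ t ⋅ s = s -> t ⋅ s ⋅ t = t -> t = inv s.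
Proof.
  intros H1 H2. destruct (inverse_unique S s) as [x0 [_ U]].
  rewrite <- (U t (conj H1 H2)). apply U, inv_spec.
Qed.

Ltac ra := repeat rewrite <- mul_assoc.
Lemma lift {S : InverseSemigroup} (a b c r : S) : a⋅b = c -> a⋅(b⋅r) = c⋅r.
Proof. intros H; rewrite mul_assoc, H; reflexivity. Qed.

Ltac liftr E := match type of E with @eq ?T _ _ =>
  let r := fresh "r" in evar (r : T); let v := eval unfold r in r in clear r;
  let H := fresh in pose proof (f_equal (fun t => t ⋅ v) E) as H; cbv beta in H;
  repeat rewrite <- mul_assoc in H; rewrite H; clear H end.

Lemma idem_inv {S : InverseSemigroup} (e : S) : idempotent S e -> inv e = e.
Proof. unfold idempotent; intros H. symmetry; apply inv_uniq; rewrite !H; auto. Qed.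

Lemma inv_inv {S : InverseSemigroup} (s : S) : inv (inv s) = s.
Proof. symmetry; apply inv_uniq; apply inv_spec. Qed.

Lemma idem_mul {S : InverseSemigroup} (e f : S) : idempotent S e -> idempotent S f -> idempotent S (e⋅f).
Proof.
  unfold idempotent; intros He Hf.
  set (a := e⋅f). set (b := inv a).
  assert (Hb : f⋅b⋅e = b).
  { apply inv_uniq.
    - unfold a. ra. rewrite (lift _ _ _ _ Hf). rewrite (lift _ _ _ _ He).
      pose proof (proj1 (inv_spec (e⋅f))) as E. fold a b in E. unfold a in E. ra. repeat rewrite <- mul_assoc in E.
      rewrite E. reflexivity.
    - pose proof (proj2 (inv_spec (e⋅f))) as E. fold a b in E. unfold a in E.
      ra. repeat rewrite <- mul_assoc in E. rewrite ?(lift _ _ _ _ He), ?(lift _ _ _ _ Hf).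
      unfold a; ra; rewrite ?(lift _ _ _ _ He), ?(lift _ _ _ _ Hf). liftr E. reflexivity. }
  assert (Hbb : b⋅b = b).
  { rewrite <- Hb at 1 2. ra.
    pose proof (proj2 (inv_spec (e⋅f))) as E. fold a b in E. unfold a in E. repeat rewrite <- mul_assoc in E.
    liftr E. rewrite mul_assoc; exact Hb. }
  assert (Hab : a = b).
  { transitivity (inv b); [apply inv_uniq | apply idem_inv, Hbb]; unfold b; apply inv_spec. }
  fold a. rewrite Hab. exact Hbb.
Qed.

Ltac ae := repeat rewrite <- mul_assoc; reflexivity.

Lemma Lss {S : InverseSemigroup} (s : S) : s ⋅ (inv s ⋅ s) = s.
Proof. rewrite mul_assoc; apply inv_spec. Qed.
Lemma Lsis {S : InverseSemigroup} (s : S) : inv s ⋅ (s ⋅ inv s) = inv s.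
Proof. rewrite mul_assoc; apply inv_spec. Qed.

Lemma idem_comm {S : InverseSemigroup} (e f : S) : idempotent S e -> idempotent S f -> e⋅f = f⋅e.
Proof.
  intros He Hf. pose proof (idem_mul e f He Hf) as Hef.
  transitivity (inv (e⋅f)); [symmetry; apply idem_inv, Hef|].
  symmetry; apply inv_uniq.
  - transitivity (e⋅(f⋅f)⋅(e⋅e)⋅f); [ae|]. rewrite Hf, He. transitivity (e⋅f⋅(e⋅f)); [ae|exact Hef].
  - transitivity (f⋅(e⋅e)⋅(f⋅f)⋅e); [ae|]. rewrite Hf, He.
    transitivity (f⋅e⋅(f⋅e)); [ae|exact (idem_mul f e Hf He)].
Qed.

Lemma idem_ssi {S : InverseSemigroup} (s : S) : idempotent S (s ⋅ inv s).
Proof. unfold idempotent. rewrite mul_assoc, (proj1 (inv_spec s)); reflexivity. Qed.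
Lemma idem_sis {S : InverseSemigroup} (s : S) : idempotent S (inv s ⋅ s).
Proof. unfold idempotent. rewrite mul_assoc, (proj2 (inv_spec s)); reflexivity. Qed.

Lemma inv_mul {S : InverseSemigroup} (s t : S) : inv (s⋅t) = inv t ⋅ inv s.
Proof.
  symmetry; apply inv_uniq.
  - transitivity (s⋅((t⋅inv t)⋅(inv s⋅s))⋅t); [ae|].
    rewrite (idem_comm _ _ (idem_ssi t) (idem_sis s)).
    transitivity ((s⋅inv s⋅s)⋅(t⋅inv t⋅t)); [ae|].
    rewrite (proj1 (inv_spec s)), (proj1 (inv_spec t)); reflexivity.
  - transitivity (inv t⋅((inv s⋅s)⋅(t⋅inv t))⋅inv s); [ae|].
    rewrite (idem_comm _ _ (idem_sis s) (idem_ssi t)).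
    transitivity ((inv t⋅t⋅inv t)⋅(inv s⋅s⋅inv s)); [ae|].
    rewrite (proj2 (inv_spec s)), (proj2 (inv_spec t)); reflexivity.
Qed.

Lemma ileq_refl {S : InverseSemigroup} (a : S) : ileq S a a.
Proof. exists (inv a ⋅ a); split; [apply idem_sis|]. symmetry; apply Lss. Qed.

Lemma ileq_trans {S : InverseSemigroup} (a b c : S) : ileq S a b -> ileq S b c -> ileq S a c.
Proof.
  intros [e [He Ha]] [f [Hf Hb]]. exists (f⋅e); split; [apply idem_mul; auto|].
  subst; ae.
Qed.

Lemma ileq_right {S : InverseSemigroup} (a b : S) : ileq S a b -> a = b⋅(inv a⋅a).
Proof.
  intros [e [He Ha]]. subst a. rewrite inv_mul, (idem_inv e He).
  transitivity (b⋅(e⋅(inv b⋅b))⋅e); [|ae].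
  rewrite (idem_comm _ _ He (idem_sis b)).
  transitivity ((b⋅inv b⋅b)⋅(e⋅e)); [|ae].
  rewrite He, (proj1 (inv_spec b)); reflexivity.
Qed.

Lemma ileq_left {S : InverseSemigroup} (a b : S) : ileq S a b -> a = a⋅inv a⋅b.
Proof.
  intros [e [He Ha]]. subst a. rewrite inv_mul, (idem_inv e He).
  transitivity (b⋅(e⋅e)⋅(inv b⋅b)); [|ae]. rewrite He.
  rewrite <- mul_assoc, (idem_comm _ _ He (idem_sis b)).
  transitivity ((b⋅inv b⋅b)⋅e); [|ae]. rewrite (proj1 (inv_spec b)); reflexivity.
Qed.

Lemma ileq_of_left {S : InverseSemigroup} (a b f : S) : idempotent S f -> a = f⋅b -> ileq S a b.
Proof.
  intros Hf Ha. subst a. exists (inv b⋅f⋅b). split.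
  - unfold idempotent.
    transitivity (inv b⋅((f⋅(b⋅inv b))⋅f)⋅b); [ae|].
    rewrite (idem_comm _ _ Hf (idem_ssi b)).
    transitivity (inv b⋅(b⋅inv b)⋅(f⋅f)⋅b); [ae|]. rewrite Hf, Lsis; reflexivity.
  - transitivity ((b⋅inv b)⋅f⋅b); [|ae].
    rewrite (idem_comm _ _ (idem_ssi b) Hf).
    transitivity (f⋅(b⋅inv b⋅b)); [|ae]. rewrite (proj1 (inv_spec b)); reflexivity.
Qed.

Lemma ileq_mul_r {S : InverseSemigroup} (a b c : S) : ileq S a b -> ileq S (a⋅c) (b⋅c).
Proof.
  intros H. apply (ileq_of_left _ _ (a⋅inv a)); [apply idem_ssi|].
  rewrite (ileq_left a b H) at 1. ae.
Qed.

Lemma ileq_mul_l {S : InverseSemigroup} (a b c : S) : ileq S a b -> ileq S (c⋅a) (c⋅b).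
Proof. intros [e [He Ha]]. exists e; split; auto. subst; ae. Qed.

Lemma ileq_mul {S : InverseSemigroup} (a b c d : S) : ileq S a b -> ileq S c d -> ileq S (a⋅c) (b⋅d).
Proof. intros H1 H2. eapply ileq_trans; [apply ileq_mul_r, H1| apply ileq_mul_l, H2]. Qed.

Lemma ileq_inv {S : InverseSemigroup} (a b : S) : ileq S a b -> ileq S (inv a) (inv b).
Proof.
  intros [e [He Ha]]. apply (ileq_of_left _ _ e He). subst. rewrite inv_mul, idem_inv; auto.
Qed.

Lemma idem_below {S : InverseSemigroup} (a b : S) : idempotent S b -> ileq S a b -> idempotent S a.
Proof. intros Hb [e [He Ha]]; subst; apply idem_mul; auto. Qed.

Lemma idem_le {S : InverseSemigroup} (e f : S) : idempotent S f -> ileq S e f -> f⋅e = e.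
Proof.
  intros Hf H. rewrite (ileq_left e f H) at 2.
  pose proof (idem_below e f Hf H) as He. rewrite (idem_inv e He), He.
  apply idem_comm; auto.
Qed.

Lemma ileq_idem_l {S : InverseSemigroup} (e z : S) : idempotent S e -> ileq S (e⋅z) z.
Proof. intros He; apply (ileq_of_left _ _ e He); reflexivity. Qed.

Lemma ileq_idem_r {S : InverseSemigroup} (e z : S) : idempotent S e -> ileq S (z⋅e) z.
Proof. intros He; exists e; auto. Qed.

Lemma sup_idem {S : InverseSemigroup} (D : S -> Prop) (y : S) :
  subset_Sigma S D -> is_sup S D y -> idempotent S y.
Proof.
  intros Hs [_ [Hub Hl]]. apply (idem_below _ (inv y ⋅ y)); [apply idem_sis|].
  apply Hl; [exact I|]. intros d Hd.
  pose proof (Hs d Hd) as He.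
  replace d with (inv d ⋅ d).
  - apply ileq_mul; [apply ileq_inv|]; apply Hub; auto.
  - rewrite (idem_inv d He). exact He.
Qed.

Lemma mirror_sup {S : InverseSemigroup} (D : S -> Prop) (x : S) :
  mirror_semigroup S -> subset_Sigma S D -> directed S D -> is_sup_Sigma S D x -> is_sup S D x.
Proof.
  intros M Hs Hd Hx. destruct (M D Hs Hd (ex_intro _ x Hx)) as [y Hy].
  pose proof (sup_idem D y Hs Hy) as Hyi.
  destruct Hx as [Hxi [Hxub Hxl]].
  split; [exact I|]. split; [exact Hxub|].
  intros z _ Hz. apply (ileq_trans _ y); [apply Hxl; auto; apply Hy | apply Hy; auto].
Qed.

Theorem proposition4p1 (S : InverseSemigroup) :
  mirror_semigroup S ->
  (separately_Scott_continuous S <-> Sigma_meet_continuous S).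
Proof.
  intros M. split.
  - intros SSC Delta x Hs Hd Hx e He.
    pose proof (mirror_sup Delta x M Hs Hd Hx) as Hx'.
    destruct (SSC Delta x Hd Hx' e) as [_ [Hub Hl]].
    split; [apply idem_mul; [apply Hx | exact He]|].
    split; [exact Hub|]. intros y _ Hy; apply Hl; auto.
  - intros MC D x Hd Hx s.
    destruct Hx as [_ [Hxub Hxl]].
    split; [exact I|]. split.
    { intros y [d [Hdd ->]]. apply ileq_mul_r, Hxub, Hdd. }
    intros z _ Hz.
    set (Delta := fun y => exists d, D d /\ y = inv d ⋅ d).
    set (e := s ⋅ inv s).
    assert (HDs : subset_Sigma S Delta).
    { intros y [d [_ ->]]. apply idem_sis. }
    assert (HDd : directed S Delta).
    { destruct Hd as [[d0 Hd0] Hd2]. split; [exists (inv d0 ⋅ d0), d0; auto|].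
      intros a b [d1 [H1 ->]] [d2 [H2 ->]].
      destruct (Hd2 d1 d2 H1 H2) as [c [Hc [Hc1 Hc2]]].
      exists (inv c ⋅ c). split; [exists c; auto|].
      split; apply ileq_mul; try apply ileq_inv; auto. }
    assert (HDx : is_sup_Sigma S Delta (inv x ⋅ x)).
    { split; [apply idem_sis|]. split.
      - intros y [d [Hdd ->]]. apply ileq_mul; [apply ileq_inv|]; apply Hxub; auto.
      - intros w Hw Hwub.
        assert (Hxw : ileq S x (x ⋅ w)).
        { apply Hxl; [exact I|]. intros d Hdd.
          rewrite <- (Lss d). apply ileq_mul; [apply Hxub; auto|].
          apply Hwub; exists d; auto. }
        pose proof (ileq_mul _ _ _ _ (ileq_inv _ _ Hxw) Hxw) as H.
        rewrite inv_mul, (idem_inv w Hw) in H.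
        eapply ileq_trans; [exact H|].
        replace (w ⋅ inv x ⋅ (x ⋅ w)) with ((w ⋅ (inv x ⋅ x)) ⋅ w) by ae.
        apply ileq_idem_l, idem_mul; [exact Hw | apply idem_sis]. }
    assert (He : idempotent S e) by apply idem_ssi.
    pose proof (MC Delta (inv x ⋅ x) HDs HDd HDx e He) as HDe.
    assert (HDes : subset_Sigma S (rmul_set S Delta e)).
    { intros y [d [Hdd ->]]. apply idem_mul; auto. }
    assert (HDed : directed S (rmul_set S Delta e)).
    { destruct HDd as [[d0 Hd0] Hd2]. split; [exists (d0 ⋅ e), d0; auto|].
      intros a b [d1 [H1 ->]] [d2 [H2 ->]].
      destruct (Hd2 d1 d2 H1 H2) as [c [Hc [Hc1 Hc2]]].
      exists (c ⋅ e). split; [exists c; auto|].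
      split; apply ileq_mul_r; auto. }
    pose proof (mirror_sup _ _ M HDes HDed HDe) as Hg.
    assert (Hgu : ileq S (inv x ⋅ x ⋅ e) (inv x ⋅ z ⋅ inv s)).
    { apply Hg; [exact I|]. intros y [f [[d [Hdd ->]] ->]].
      assert (Hds : ileq S (d ⋅ s) z) by (apply Hz; exists d; auto).
      assert (H : ileq S (inv x ⋅ (d ⋅ s ⋅ inv s)) (inv x ⋅ z ⋅ inv s)).
      { rewrite <- (mul_assoc _ (inv x) z). apply ileq_mul_l, ileq_mul_r, Hds. }
      replace (inv d ⋅ d ⋅ e) with (inv x ⋅ (d ⋅ s ⋅ inv s)); [exact H|].
      assert (Hdx : ileq S d x) by (apply Hxub; auto).
      rewrite (ileq_right d x Hdx) at 1.
      transitivity ((inv x ⋅ x) ⋅ (inv d ⋅ d) ⋅ e); [unfold e; ae|].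
      rewrite (idem_le _ _ (idem_sis x)); [reflexivity|].
      apply ileq_mul; [apply ileq_inv|]; auto. }
    pose proof (ileq_mul_r _ _ s (ileq_mul_l _ _ x Hgu)) as H.
    replace (x ⋅ (inv x ⋅ x ⋅ e) ⋅ s) with (x ⋅ s) in H.
    2:{ unfold e. transitivity ((x ⋅ inv x ⋅ x) ⋅ (s ⋅ inv s ⋅ s)); [|ae].
        rewrite (proj1 (inv_spec x)), (proj1 (inv_spec s)); reflexivity. }
    eapply ileq_trans; [exact H|].
    replace (x ⋅ (inv x ⋅ z ⋅ inv s) ⋅ s) with ((x ⋅ inv x) ⋅ (z ⋅ (inv s ⋅ s))) by ae.
    eapply ileq_trans; [apply ileq_idem_l, idem_ssi|]. apply ileq_idem_r, idem_sis.
Qed.
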